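(* Let $(G, I, O)$ be an open graph with $G=(V,E)$, and let $(g, \prec, \lambda)$ be an extended gflow of $(G,I,O)$. Let $(p_i)_{i=1,\dots,|V|}$ be a permutation of $V$ such that for all $i<j$ we have $p_i \not\succ p_j$ (i.e. a linear extension of $\prec$). Then for every $i \in \{1,\dots,|V|-1\}$, the cut-rank $\rho_G(\{p_1,\dots,p_i\})$ is at most $|O|$; that is, $p$ is a linear rank-decomposition of $G$ of width at most $|O|$. *)

(* Defs.v *)
From HB Require Import structures.
From mathcomp Require Import all_boot all_order all_algebra.
Set Implicit Arguments. Unset Strict Implicit. Unset Printing Implicit Defensive.
Import GRing.Theory.

Definition simple_graph (V : finType) (e : rel V) : Prop :=
  symmetric e /\ irreflexive e.

Definition odd_nbh (V : finType) (e : rel V) (A : {set V}) : {set V} :=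
  [set v | odd #|[set u in A | e v u]|].

Inductive plane := XY | XZ | YZ.

Definition strict_porder (V : finType) (prec : rel V) : Prop :=
  irreflexive prec /\ transitive prec.

Definition ext_gflow (V : finType) (e : rel V) (I O : {set V})
    (g : V -> {set V}) (prec : rel V) (lam : V -> plane) : Prop :=
  strict_porder prec /\
  forall u, u \notin O ->
    g u \subset ~: I /\
    [/\ (forall v, v \in g u -> v != u -> prec u v),
        (forall v, v \in odd_nbh e (g u) -> v != u -> prec u v),
        (lam u = XY -> u \notin g u /\ u \in odd_nbh e (g u)),
        (lam u = XZ -> u \in g u /\ u \in odd_nbh e (g u)) &
        (lam u = YZ -> u \in g u /\ u \notin odd_nbh e (g u))].

Definition cut_rank (V : finType) (e : rel V) (X : {set V}) : nat :=
  \rank (\matrix_(i < #|X|, j < #|~: X|)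
           ((e (@enum_val V (mem X) i) (@enum_val V (mem (~: X)) j))%:R : 'F_2))%R.

(* Main.v *)
Require Import Defs.
From mathcomp Require Import all_boot all_order all_algebra.
From mathcomp Require Import zify.
Import GRing.Theory.

Lemma sum_bool_card (T : finType) (P : pred T) :
  \sum_(j : T) (P j : nat) = #|[set j | P j]|.
Proof.
rewrite -sum1_card [RHS]big_mkcond /=; apply: eq_bigr => j _; rewrite inE.
by case: (P j).
Qed.

Lemma F2_nat (m : nat) : (m%:R : 'F_2)%R = ((odd m)%:R : 'F_2)%R.
Proof. by rewrite -(Fp_nat_mod (p:=2)) // modn2. Qed.

Lemma sum_odd (V : finType) (e : rel V) (Y S : {set V}) (x : V) :
  S \subset Y ->
  (\sum_(j < #|Y|) ((@enum_val V (mem Y) j \in S)%:R *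
       (e x (@enum_val V (mem Y) j))%:R : 'F_2))%R
   = ((x \in odd_nbh e S)%:R)%R.
Proof.
move=> SY.
under eq_bigr => j _ do rewrite -natrM mulnb.
rewrite -natr_sum sum_bool_card F2_nat inE.
have -> : [set u in S | e x u] =
   [set @enum_val V (mem Y) j | j in
       [set j | (@enum_val V (mem Y) j \in S) && e x (@enum_val V (mem Y) j)]].
  apply/setP => u; rewrite !inE; apply/andP/imsetP.
  - move=> [uS exu].
    have uY : u \in Y by apply: (subsetP SY).
    exists (enum_rank_in uY u); last by rewrite enum_rankK_in.
    by rewrite inE enum_rankK_in // uS exu.
  - by move=> [j]; rewrite inE => /andP [h1 h2] ->.
by rewrite card_imset //; apply: enum_val_inj.
Qed.

Theorem lemma1 (V : finType) (e : rel V) (I O : {set V})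
    (g : V -> {set V}) (prec : rel V) (lam : V -> plane)
    (p : 'I_#|V| -> V) :
  simple_graph e ->
  ext_gflow e I O g prec lam ->
  bijective p ->
  (forall i j : 'I_#|V|, (i < j)%N -> ~~ prec (p j) (p i)) ->
  forall i : nat, (1 <= i)%N -> (i <= #|V| - 1)%N ->
    (cut_rank e [set p k | k : 'I_#|V| & (k < i)%N] <= #|O|)%N.
Proof.
move=> _ [[irr tr] hg] [pinv pK pinvK] hp i _ _.
set X := [set p k | k : 'I_#|V| & (k < i)%N].
pose idx (x : V) : nat := pinv x.
have memX x : (x \in X) = (idx x < i)%N.
  apply/imsetP/idP => [[k]|hx]; first by rewrite inE => hk ->; rewrite /idx pK.
  by exists (pinv x); rewrite ?inE ?pinvK.
have precI a b : prec a b -> (idx a < idx b)%N.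
  move=> hab; rewrite ltnNge; apply/negP => hle.
  move: hle; rewrite leq_eqVlt => /orP [/eqP hq | hlt].
  - have eab : a = b by rewrite -(pinvK a) -(pinvK b); congr p; apply/val_inj.
    by move: hab; rewrite eab irr.
  - by have := hp _ _ hlt; rewrite !pinvK hab.
set Y := ~: X.
have futY x y : x \in Y -> prec x y -> y \in Y.
  rewrite !inE !memX -!leqNgt => hx /precI h.
  exact: leq_trans hx (ltnW h).
have gY u : u \notin O -> u \in Y ->
   (forall v, v \in g u -> v \in Y) /\ (forall v, v \in odd_nbh e (g u) -> v \in Y).
  move=> uO uY; have [_ [h1 h2 _ _ _]] := hg u uO.
  split=> v hv; (case: (eqVneq v u) => [->//|vu]; apply: (futY u) => //).
  - exact: h1.
  - exact: h2.
rewrite /cut_rank.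
set A := (\matrix_(i0, j) _)%R.
pose yv := @enum_val V (mem Y).
pose uv := @enum_val V (mem (Y :\: O)).
have uvP r : uv r \in Y /\ uv r \notin O.
  by have := enum_valP r; rewrite inE => /andP [h1 h2]; split.
pose B : 'M['F_2]_(#|Y :\: O|, #|Y|) := (\matrix_(r, j) ((yv j \in g (uv r))%:R))%R.
have gsub r : g (uv r) \subset Y.
  by apply/subsetP => v; have [h1 h2] := uvP r; have [h _] := gY _ h2 h1; apply: h.
have BA : (B *m A^T)%R = 0%R.
  apply/matrixP => r l; rewrite !mxE.
  under eq_bigr => j _ do rewrite !mxE.
  rewrite (@sum_odd _ e _ _ _ (gsub r)).
  have [h1 h2] := uvP r; have [_ h] := gY _ h2 h1.
  case: (boolP (_ \in odd_nbh e _)) => // hin.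
  have := h _ hin; rewrite inE.
  by have := @enum_valP V (mem X) l => /= ->.
pose N : 'M['F_2]_(#|Y|, #|Y|) := (\matrix_(j, j') ((e (yv j') (yv j))%:R))%R.
have Bfree : row_free B.
  rewrite -kermx_eq0; apply/rowV0P => w /sub_kermxP wB0.
  apply/rowP => r; rewrite mxE; apply/eqP; apply/negPn/negP => wr.
  case: (@arg_minnP _ r (fun r => w 0 r != 0)%R (fun r => idx (uv r)) wr) => r0 wr0 rmin; clear r wr.
  set u := uv r0.
  have uY : u \in Y by have [] := uvP r0.
  have uO : u \notin O by have [] := uvP r0.
  pose ju : 'I_#|Y| := enum_rank_in uY u.
  have yju : yv ju = u by rewrite /yv /ju enum_rankK_in.
  have key (h : 'I_#|Y :\: O| -> {set V}) :
      (forall r v, v \in h r -> v != uv r -> prec (uv r) v) ->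
      (\sum_r w 0 r * (u \in h r)%:R = w 0 r0 * (u \in h r0)%:R)%R.
    move=> hh; rewrite (bigD1 r0) //= big1 ?addr0 // => r' hr'.
    case: (eqVneq (w 0%R r') 0%R) => [->|wr']; first by rewrite mul0r.
    case: (boolP (u \in h r')) => hu; last by rewrite mulr0.
    have neq : u != uv r'.
      apply/eqP => E; move: hr' => /eqP; apply; apply: enum_val_inj; exact: esym.
    have := precI _ _ (hh r' u hu neq); have := rmin r' wr'.
    by rewrite /u => h1 h2; move: (leq_trans h2 h1); rewrite ltnn.
  have e1 : (w 0 r0 * (u \in g u)%:R = 0)%R.
    have := congr1 (fun M : 'rV['F_2]_#|Y| => M 0%R ju) wB0; rewrite !mxE /=.
    under eq_bigr => r _ do rewrite mxE yju.
    rewrite key // => r v hv hvr.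
    have [_ h] := uvP r; have [_ [h1 _ _ _ _]] := hg _ h; exact: h1.
  have e2 : (w 0 r0 * (u \in odd_nbh e (g u))%:R = 0)%R.
    have := congr1 (fun M : 'rV['F_2]_#|Y| => (M *m N)%R 0%R ju) wB0; rewrite mul0mx -mulmxA !mxE /=.
    under eq_bigr => r _ do rewrite mxE.
    under eq_bigr => r _.
      under eq_bigr => j _ do rewrite !mxE yju.
      rewrite (@sum_odd _ e _ _ _ (gsub r)).
    over.
    rewrite key // => r v hv hvr.
    have [_ h] := uvP r; have [_ [_ h2 _ _ _]] := hg _ h; exact: h2.
  have [_ [_ _ hXY hXZ hYZ]] := hg u uO.
  move: wr0; case E: (lam u).
  - by have [_ hh] := hXY E; move: e2; rewrite hh mulr1 => ->; rewrite eqxx.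
  - by have [hh _] := hXZ E; move: e1; rewrite hh mulr1 => ->; rewrite eqxx.
  - by have [hh _] := hYZ E; move: e1; rewrite hh mulr1 => ->; rewrite eqxx.
have h1 : (\rank B <= \rank (kermx A^T))%N.
  by apply: mxrankS; apply/sub_kermxP.
rewrite mxrank_ker mxrank_tr (eqP Bfree) in h1.
have h2 := rank_leq_col A.
have h3 : (#|Y| <= #|Y :\: O| + #|O|)%N.
  rewrite cardsD; have := subset_leq_card (subsetIr Y O); lia.
have arith : forall k c a o : nat, (k <= c - a -> a <= c -> c <= k + o -> a <= o)%N by move=> *; lia.
exact: (arith _ _ _ _ h1 h2 h3).
Qed.
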